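(* Let $\langle v,w\rangle=g(v,w)+\mathrm{i}\,\omega(v,w)$ for $v,w\in V$, and let $M\in\mathcal{G}$. Then for all $v,w\in V$: $$\langle C_Mv,w\rangle=\langle v,C_{M^{-1}}w\rangle,\qquad \langle D_Mv,w\rangle=\begin{cases}-\langle D_{M^{-1}}w,v\rangle&\text{(bosons)}\\ +\langle D_{M^{-1}}w,v\rangle&\text{(fermions)}\end{cases},$$ and, when $C_M$ is invertible so that $Z_M=C_M^{-1}D_M$ is defined, $$\langle Z_Mv,w\rangle=\begin{cases}+\langle Z_Mw,v\rangle&\text{(bosons)}\\ -\langle Z_Mw,v\rangle&\text{(fermions)}\end{cases}.$$
   Context: $V=\mathbb{R}^{2N}$. Bosons: symplectic form $\Omega^{ab}$ (standard $\begin{pmatrix}0&\mathbb{1}\\-\mathbb{1}&0\end{pmatrix}$), $\mathcal{G}=\mathrm{Sp}(2N,\mathbb{R})$, $J$ a complex structure ($J^2=-\mathbb{1}$) with $J\Omega J^\intercal=\Omega$ and $G:=-J\Omega$ positive definite. Fermions: metric $G=\mathbb{1}$, $\mathcal{G}=\mathrm{SO}(2N,\mathbb{R})$, $J$ orthogonal with $J^2=-\mathbb{1}$, and $\Omega:=JG$. In both cases $g=G^{-1}$ and $\omega=\Omega^{-1}$ are the corresponding bilinear forms on $V$, and $V$ is regarded as a complex vector space with $\mathrm{i}$ acting as $J$. $C_M=\frac12(M-JMJ)$, $D_M=\frac12(M+JMJ)$. *)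

(* Defs.v *)
From HB Require Import structures.
From mathcomp Require Import all_boot all_order all_algebra.
From mathcomp Require Import complex.
Set Implicit Arguments. Unset Strict Implicit. Unset Printing Implicit Defensive.
Import Order.TTheory GRing.Theory Num.Theory.
Local Open Scope ring_scope.

(* V = R^(2N) is represented by column vectors 'cV[R]_(N + N);
   linear maps (J, M, C_M, ...) act on the left; bivectors (Omega^{ab},
   G^{ab}) and bilinear forms (g_{ab}, omega_{ab}) are square matrices. *)

Definition bform (R : ringType) (n : nat) (B : 'M[R]_n) (v w : 'cV[R]_n) : R :=
  (v^T *m B *m w) 0 0.

Definition Omega_std (R : ringType) (N : nat) : 'M[R]_(N + N) :=
  block_mx 0 1%:M (- 1%:M) 0.

Definition posdef (R : numDomainType) (n : nat) (G : 'M[R]_n) : Prop :=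
  G^T = G /\ forall v : 'cV[R]_n, v != 0 -> 0 < bform G v v.

Definition CM (R : fieldType) (n : nat) (J M : 'M[R]_n) : 'M[R]_n :=
  2%:R^-1 *: (M - J *m M *m J).
Definition DM (R : fieldType) (n : nat) (J M : 'M[R]_n) : 'M[R]_n :=
  2%:R^-1 *: (M + J *m M *m J).
Definition ZM (R : fieldType) (n : nat) (J M : 'M[R]_n) : 'M[R]_n :=
  invmx (CM J M) *m DM J M.

(* <v,w> = g(v,w) + i omega(v,w) with g = G^{-1}, omega = Omega^{-1} *)
Definition cinner (R : rcfType) (n : nat) (G Om : 'M[R]_n) (v w : 'cV[R]_n)
  : R[i] :=
  ((bform (invmx G) v w)%:C + 'i * (bform (invmx Om) v w)%:C)%C.

(* Main.v *)
Require Import Defs.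
From HB Require Import structures.
From mathcomp Require Import all_boot all_order all_algebra.
From mathcomp Require Import complex.
Import Order.TTheory GRing.Theory Num.Theory.
Local Open Scope ring_scope.


Lemma trCM (R : numFieldType) n (J X : 'M[R]_n) :
  (CM J X)^T = 2%:R^-1 *: (X^T - J^T *m (X^T *m J^T)).
Proof. by rewrite /CM linearZ /= linearB /= !trmx_mul mulmxA. Qed.

Lemma trDM (R : numFieldType) n (J X : 'M[R]_n) :
  (DM J X)^T = 2%:R^-1 *: (X^T + J^T *m (X^T *m J^T)).
Proof. by rewrite /DM linearZ /= linearD /= !trmx_mul mulmxA. Qed.

Lemma adjC (R : numFieldType) n (J B M Mi : 'M[R]_n)
  (hJ : forall Y : 'M_n, J^T *m (B *m Y) = - (B *m (J *m Y)))
  (hM : forall Y : 'M_n, M^T *m (B *m Y) = B *m (Mi *m Y)) :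
  (CM J M)^T *m B = B *m CM J Mi /\ (DM J M)^T *m B = B *m DM J Mi.
Proof.
have hJ0 := hJ 1%:M; have hM0 := hM 1%:M; rewrite !mulmx1 in hJ0 hM0.
rewrite trCM trDM /CM /DM -!scalemxAl -!scalemxAr; split; congr (_ *: _).
  by rewrite mulmxBl mulmxBr -!mulmxA hJ0 !mulmxN hM hJ opprK hM0.
by rewrite mulmxDl mulmxDr -!mulmxA hJ0 !mulmxN hM hJ opprK hM0.
Qed.

Lemma CJ (R : numFieldType) n (J X : 'M[R]_n) : J *m J = -1%:M ->
  J *m CM J X = CM J X *m J /\ J *m DM J X = - (DM J X *m J).
Proof.
move=> hJ; rewrite /CM /DM -!scalemxAl -!scalemxAr -scalerN; split; congr (_ *: _).
  rewrite mulmxBl mulmxBr !mulmxA hJ -[J *m X *m J *m J]mulmxA hJ.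
  by rewrite !mulmxN !mulmx1 !mulNmx !mul1mx !opprK addrC.
rewrite mulmxDl mulmxDr !mulmxA hJ -[J *m X *m J *m J]mulmxA hJ.
by rewrite !mulmxN !mulmx1 !mulNmx !mul1mx opprD addrC !opprK.
Qed.

Lemma adjC1 (R : numFieldType) n (J B M Mi : 'M[R]_n)
  (hJJ : J *m J = -1%:M)
  (hJ : forall Y : 'M_n, J^T *m (B *m Y) = - (B *m (J *m Y)))
  (hM : forall Y : 'M_n, M^T *m (B *m Y) = B *m (Mi *m Y)) :
  (CM J M)^T *m (B *m J) = (B *m J) *m CM J Mi /\
  (DM J M)^T *m (B *m J) = - ((B *m J) *m DM J Mi).
Proof.
have [h1 h2] := @adjC _ _ J B M Mi hJ hM; have [c1 c2] := @CJ _ _ J Mi hJJ.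
rewrite !mulmxA h1 h2 -!mulmxA c1 c2 mulmxN opprK; split=> //.
Qed.

Lemma cross (R : numFieldType) n (J M Mi : 'M[R]_n) :
  J *m J = -1%:M -> M *m Mi = 1%:M ->
  CM J M *m DM J Mi = - (DM J M *m CM J Mi).
Proof.
move=> hJ hM.
have eM : forall X : 'M[R]_n, CM J X + DM J X = X.
  move=> X; rewrite /CM /DM -scalerDr addrACA addNr addr0 -mulr2n -scaler_nat scalerA.
  by rewrite mulVf ?scale1r // pnatr_eq0.
set F := CM J M *m DM J Mi + DM J M *m CM J Mi.
set E := CM J M *m CM J Mi + DM J M *m DM J Mi.
have hEF : E + F = 1%:M.
  by rewrite /E /F addrACA -!mulmxDr (addrC (DM J Mi)) -mulmxDl !eM.
have [c1 d1] := @CJ _ _ J M hJ; have [c2 d2] := @CJ _ _ J Mi hJ.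
have hE : J *m E = E *m J.
  rewrite /E mulmxDr mulmxDl !mulmxA c1 d1 !mulNmx -!mulmxA c2 d2 !mulmxN opprK.
  by rewrite !mulmxA.
have hF : J *m F = - (F *m J).
  rewrite /F mulmxDr mulmxDl !mulmxA c1 d1 !mulNmx -!mulmxA c2 d2 !mulmxN.
  by rewrite !mulmxA opprD.
have hF2 : J *m F = F *m J.
  have -> : F = 1%:M - E by rewrite -hEF addrC addKr.
  by rewrite mulmxBr mulmxBl mulmx1 mul1mx hE.
have FJ0 : F *m J = 0.
  have h : (2%:R : R) *: (F *m J) = 0.
    by rewrite scaler_nat mulr2n -{1}hF2 hF addNr.
  by move/eqP: h; rewrite scaler_eq0 pnatr_eq0 /= => /eqP.
have : F *m J *m J = 0 by rewrite FJ0 mul0mx.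
rewrite -mulmxA hJ mulmxN mulmx1 => /eqP; rewrite oppr_eq0 /F addr_eq0 => /eqP //.
Qed.

Lemma myadjZ (R : numFieldType) n (B C D C' D' : 'M[R]_n) :
  B \in unitmx -> C \in unitmx ->
  C^T *m B = B *m C' -> D^T *m B = B *m D' -> C *m D' = - (D *m C') ->
  (invmx C *m D)^T *m B = - (B *m (invmx C *m D)).
Proof.
move=> uB uC hC hD hX.
have eC' : C' = invmx B *m (C^T *m B) by rewrite hC mulKmx.
have uC' : C' \in unitmx by rewrite eC' !unitmx_mul unitmx_inv uB unitmx_tr uC.
have uCt : C^T \in unitmx by rewrite unitmx_tr.
have h1 : invmx (C^T) *m B = B *m invmx C'.
  apply: (canRL (mulmxK uC')).
  by rewrite -mulmxA -hC mulKmx.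
have h2 : D' *m invmx C' = - (invmx C *m D).
  have -> : D' = invmx C *m (C *m D') by rewrite mulKmx.
  by rewrite hX mulmxN mulNmx mulmxA mulmxK.
rewrite trmx_mul trmx_inv -mulmxA h1 mulmxA hD -mulmxA h2 mulmxN.
by [].
Qed.

Lemma bformMl (R : comNzRingType) n (B A : 'M[R]_n) v w :
  bform B (A *m v) w = bform (A^T *m B) v w.
Proof. by rewrite /bform trmx_mul !mulmxA. Qed.

Lemma bformMr (R : comNzRingType) n (B A : 'M[R]_n) v w :
  bform B v (A *m w) = bform (B *m A) v w.
Proof. by rewrite /bform !mulmxA. Qed.

Lemma bform_sym (R : comNzRingType) n (B : 'M[R]_n) v w :
  bform B w v = bform B^T v w.
Proof.
rewrite /bform.
have -> : v^T *m B^T *m w = (w^T *m B *m v)^T by rewrite !trmx_mul trmxK mulmxA.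
by rewrite [RHS]mxE.
Qed.

Lemma bformN (R : comNzRingType) n (B : 'M[R]_n) v w :
  bform (- B) v w = - bform B v w.
Proof. by rewrite /bform mulmxN mulNmx mxE. Qed.

Lemma L1 (R : rcfType) n (G Om A A' : 'M[R]_n) v w :
  A^T *m invmx G = invmx G *m A' -> A^T *m invmx Om = invmx Om *m A' ->
  cinner G Om (A *m v) w = cinner G Om v (A' *m w).
Proof. by move=> h1 h2; rewrite /cinner !bformMl !bformMr h1 h2. Qed.

Lemma L2 (R : rcfType) n (G Om A A' : 'M[R]_n) v w :
  A^T *m invmx G = - ((invmx G)^T *m A') ->
  A^T *m invmx Om = - ((invmx Om)^T *m A') ->
  cinner G Om (A *m v) w = - cinner G Om (A' *m w) v.
Proof.
move=> h1 h2; rewrite /cinner !bformMl (bform_sym _ _ _ v w) (bform_sym _ _ _ v w).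
rewrite !trmx_mul !trmxK h1 h2.
by rewrite bformN bformN !rmorphN opprD mulrN.
Qed.

Lemma L3 (R : rcfType) n (G Om A A' : 'M[R]_n) v w :
  A^T *m invmx G = (invmx G)^T *m A' ->
  A^T *m invmx Om = (invmx Om)^T *m A' ->
  cinner G Om (A *m v) w = cinner G Om (A' *m w) v.
Proof.
move=> h1 h2; rewrite /cinner !bformMl (bform_sym _ _ _ v w) (bform_sym _ _ _ v w).
by rewrite !trmx_mul !trmxK -h1 -h2.
Qed.

Lemma adjZ1 (R : numFieldType) n (J B C D C' D' : 'M[R]_n) :
  B \in unitmx -> C \in unitmx -> J *m C = C *m J -> J *m D = - (D *m J) ->
  C^T *m B = B *m C' -> D^T *m B = B *m D' -> C *m D' = - (D *m C') ->
  (invmx C *m D)^T *m (B *m J) = (B *m J) *m (invmx C *m D).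
Proof.
move=> uB uC hCJ hDJ hC hD hX.
have hZ := @myadjZ _ _ B C D C' D' uB uC hC hD hX.
have hCi : invmx C *m J = J *m invmx C.
  rewrite -[LHS]mulmx1 -(mulmxV uC) !mulmxA -[invmx C *m J *m C]mulmxA hCJ.
  by rewrite mulmxA mulVmx // mul1mx.
have hDJ' : D *m J = - (J *m D) by rewrite hDJ opprK.
rewrite mulmxA hZ mulNmx -!mulmxA hDJ' !mulmxN opprK [invmx C *m (J *m D)]mulmxA hCi -mulmxA.
by [].
Qed.

Lemma inv_uniq (R : comUnitRingType) n (A B : 'M[R]_n) :
  A *m B = 1%:M -> invmx A = B.
Proof.
move=> h; have [uA uB] := mulmx1_unit h.
by rewrite -[invmx A]mulmx1 -h mulmxA mulVmx // mul1mx.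
Qed.


Lemma OO (R : comNzRingType) N : Omega_std R N *m Omega_std R N = - 1%:M.
Proof.
rewrite /Omega_std mulmx_block scalar_mx_block opp_block_mx.
by rewrite !mul0mx !mulmx0 !mul1mx !mulmx1 !add0r !addr0 oppr0.
Qed.
Lemma Ot (R : comNzRingType) N : (Omega_std R N)^T = - Omega_std R N.
Proof.
by rewrite /Omega_std tr_block_mx !trmx0 trmx1 linearN /= trmx1 opp_block_mx opprK oppr0.
Qed.

Lemma bos (R : rcfType) (N : nat) :
  (forall (J M : 'M[R]_(N + N)),
     J *m J = - 1%:M ->
     J *m Omega_std R N *m J^T = Omega_std R N ->
     posdef (- (J *m Omega_std R N)) ->
     M *m Omega_std R N *m M^T = Omega_std R N ->
     let G := - (J *m Omega_std R N) in
     let Om := Omega_std R N in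
     (forall v w : 'cV[R]_(N + N),
        cinner G Om (CM J M *m v) w = cinner G Om v (CM J (invmx M) *m w)) /\
     (forall v w : 'cV[R]_(N + N),
        cinner G Om (DM J M *m v) w = - cinner G Om (DM J (invmx M) *m w) v) /\
     (CM J M \in unitmx ->
      forall v w : 'cV[R]_(N + N),
        cinner G Om (ZM J M *m v) w = cinner G Om (ZM J M *m w) v)).
Proof.
move=> J M hJJ hJO [hGt _] hM G Om.
have {hM}hM : M *m Om *m M^T = Om := hM.
have {hJO}hJO : J *m Om *m J^T = Om := hJO.
have hOO : Om *m Om = - 1%:M by apply: OO.
have hOt : Om^T = - Om by apply: Ot.
have hw : invmx Om = - Om by apply: inv_uniq; rewrite mulmxN hOO opprK.
have uOm : Om \in unitmx by have [] := mulmx1_unit (etrans (mulmxN _ _) (etrans (congr1 _ hOO) (opprK _))).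
have hOJ : Om *m J^T = - (J *m Om).
  have := congr1 (mulmx J) hJO; rewrite !mulmxA hJJ !mulNmx !mul1mx => <-.
  by rewrite opprK.
have hJt : J^T *m Om = - (Om *m J).
  have := congr1 (fun X => Om *m X *m Om) hOJ.
  rewrite !mulmxA hOO !mulNmx mul1mx !mulmxN !mulNmx -!mulmxA hOO !mulmxN mulmx1 opprK => <-.
  by rewrite opprK.
have uM : M \in unitmx.
  have [] := @mulmx1_unit _ _ M (Om *m M^T *m (- Om)) => //.
  by rewrite !mulmxA hM mulmxN hOO opprK.
set Mi := invmx M.
have hOM : Om *m M^T = Mi *m Om.
  by rewrite -[Om *m M^T](mulKmx uM) [M *m (Om *m _)]mulmxA hM.
have hMt : M^T *m Om = Om *m Mi.
  have := congr1 (fun X => Om *m X *m Om) hOM.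
  rewrite !mulmxA hOO mulNmx mul1mx -!mulmxA hOO mulmxN mulmx1 mulNmx mulmxN => /eqP.
  by rewrite eqr_opp => /eqP.
have hJ : forall Y : 'M_(N + N), J^T *m ((- Om) *m Y) = - ((- Om) *m (J *m Y)).
  by move=> Y; rewrite !mulNmx mulmxN mulmxA hJt mulNmx -mulmxA.
have hMY : forall Y : 'M_(N + N), M^T *m ((- Om) *m Y) = (- Om) *m (Mi *m Y).
  by move=> Y; rewrite !mulNmx mulmxN mulmxA hMt -mulmxA.
have hg : invmx G = (- Om) *m J.
  apply: inv_uniq; rewrite /G !mulNmx mulmxN opprK !mulmxA -[J *m Omega_std R N *m Om]mulmxA hOO.
  by rewrite mulmxN mulmx1 mulNmx hJJ opprK.
have hgt : (invmx G)^T = invmx G by rewrite trmx_inv hGt.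
have [aC aD] := @adjC _ _ J (- Om) M Mi hJ hMY.
have [aC1 aD1] := @adjC1 _ _ J (- Om) M Mi hJJ hJ hMY.
split; [|split].
- move=> v w; apply: L1; first by rewrite hg aC1.
  by rewrite hw aC.
- move=> v w; apply: L2; first by rewrite hgt hg aD1.
  by rewrite hw aD linearN /= hOt opprK mulNmx.
- move=> uC v w; apply: L3.
  + rewrite hgt hg /ZM.
    apply: (@adjZ1 _ _ J (- Om) (CM J M) (DM J M) (CM J Mi) (DM J Mi)) => //.
    * by rewrite -hw unitmx_inv.
    * by case: (@CJ _ _ J M hJJ).
    * by case: (@CJ _ _ J M hJJ).
    * by apply: cross => //; rewrite /Mi mulmxV.
  + have uB : (- Om) \in unitmx by rewrite -hw unitmx_inv.
    have hX : CM J M *m DM J Mi = - (DM J M *m CM J Mi).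
      by apply: cross => //; rewrite /Mi mulmxV.
    rewrite hw (@myadjZ _ _ _ _ _ _ _ uB uC aC aD hX).
    by rewrite linearN /= hOt opprK mulNmx opprK.
Qed.

Lemma ferm (R : rcfType) (N : nat) :
  (forall (J M : 'M[R]_(N + N)),
     J *m J = - 1%:M ->
     J *m J^T = 1%:M ->
     M *m M^T = 1%:M -> \det M = 1 ->
     let G := (1%:M : 'M[R]_(N + N)) in
     let Om := J *m G in
     (forall v w : 'cV[R]_(N + N),
        cinner G Om (CM J M *m v) w = cinner G Om v (CM J (invmx M) *m w)) /\
     (forall v w : 'cV[R]_(N + N),
        cinner G Om (DM J M *m v) w = cinner G Om (DM J (invmx M) *m w) v) /\
     (CM J M \in unitmx ->
      forall v w : 'cV[R]_(N + N),
        cinner G Om (ZM J M *m v) w = - cinner G Om (ZM J M *m w) v)).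
Proof.
move=> J M hJJ hJt1 hMt1 _ G Om.
have hJt : J^T = - J.
  have -> : J^T = - (J *m J) *m J^T by rewrite hJJ opprK mul1mx.
  by rewrite mulNmx -mulmxA hJt1 mulmx1.
have hMi : invmx M = M^T by apply: inv_uniq.
have uM : M \in unitmx by have [] := mulmx1_unit hMt1.
set Mi := invmx M.
have hg : invmx G = 1%:M by apply: inv_uniq; rewrite mulmx1.
have hw : invmx Om = - (1%:M *m J).
  by apply: inv_uniq; rewrite /Om mulmx1 mul1mx mulmxN hJJ opprK.
have hwt : (invmx Om)^T = J by rewrite hw linearN /= trmx_mul trmx1 mulmx1 hJt opprK.
have hJ : forall Y : 'M_(N + N), J^T *m (1%:M *m Y) = - (1%:M *m (J *m Y)).
  by move=> Y; rewrite !mul1mx hJt mulNmx.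
have hMY : forall Y : 'M_(N + N), M^T *m (1%:M *m Y) = 1%:M *m (Mi *m Y).
  by move=> Y; rewrite !mul1mx /Mi hMi.
have [aC aD] := @adjC _ _ J 1%:M M Mi hJ hMY.
have [aC1 aD1] := @adjC1 _ _ J 1%:M M Mi hJJ hJ hMY.
have hX : CM J M *m DM J Mi = - (DM J M *m CM J Mi).
  by apply: cross => //; rewrite /Mi mulmxV.
split; [|split].
- move=> v w; apply: L1; first by rewrite hg aC.
  by rewrite hw mulmxN aC1 mulNmx.
- move=> v w; apply: L3; first by rewrite hg aD trmx1.
  by rewrite hwt hw mulmxN aD1 opprK mul1mx.
- move=> uC v w; have u1 : (1%:M : 'M[R]_(N + N)) \in unitmx by exact: unitmx1.
  apply: L2.
  + by rewrite hg trmx1 /ZM (@myadjZ _ _ _ _ _ _ _ u1 uC aC aD hX).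
  + rewrite hwt hw mulmxN /ZM.
    rewrite (@adjZ1 _ _ J 1%:M (CM J M) (DM J M) (CM J Mi) (DM J Mi)) //.
    * by rewrite mul1mx.
    * by case: (@CJ _ _ J M hJJ).
    * by case: (@CJ _ _ J M hJJ).
Qed.

Theorem lemma3 (R : rcfType) (N : nat) :
  (* bosons *)
  (forall (J M : 'M[R]_(N + N)),
     J *m J = - 1%:M ->
     J *m Omega_std R N *m J^T = Omega_std R N ->
     posdef (- (J *m Omega_std R N)) ->
     M *m Omega_std R N *m M^T = Omega_std R N ->
     let G := - (J *m Omega_std R N) in
     let Om := Omega_std R N in
     (forall v w : 'cV[R]_(N + N),
        cinner G Om (CM J M *m v) w = cinner G Om v (CM J (invmx M) *m w)) /\
     (forall v w : 'cV[R]_(N + N),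
        cinner G Om (DM J M *m v) w = - cinner G Om (DM J (invmx M) *m w) v) /\
     (CM J M \in unitmx ->
      forall v w : 'cV[R]_(N + N),
        cinner G Om (ZM J M *m v) w = cinner G Om (ZM J M *m w) v)) /\
  (* fermions *)
  (forall (J M : 'M[R]_(N + N)),
     J *m J = - 1%:M ->
     J *m J^T = 1%:M ->
     M *m M^T = 1%:M -> \det M = 1 ->
     let G := (1%:M : 'M[R]_(N + N)) in
     let Om := J *m G in
     (forall v w : 'cV[R]_(N + N),
        cinner G Om (CM J M *m v) w = cinner G Om v (CM J (invmx M) *m w)) /\
     (forall v w : 'cV[R]_(N + N),
        cinner G Om (DM J M *m v) w = cinner G Om (DM J (invmx M) *m w) v) /\
     (CM J M \in unitmx ->
      forall v w : 'cV[R]_(N + N),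
        cinner G Om (ZM J M *m v) w = - cinner G Om (ZM J M *m w) v)).
Proof.
split; [exact: bos | exact: ferm].
Qed.
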